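(* Let $r\ge4$ and $s\in\{2,\dots,r-1\}$, and let $A=\{a_1,\dots,a_s\}$ and $B=\{b_1,\dots,b_s\}$ be two different $s$-partitions of $r$. Then the graphs $\widehat K_r(A)$ and $\widehat K_r(B)$ are non-isomorphic, and they are isospectral both for the standard Laplacian and for the signless standard Laplacian.
   Context: An $s$-partition of $r\in\mathbb N$ is a multiset $\{a_1,\dots,a_s\}$ of positive integers with $a_1+\dots+a_s=r$. $\widehat K_r$ is the graph obtained from the complete graph $K_r$ (vertices $w_1,\dots,w_r$) by attaching a pendant vertex $v_i$ to each $w_i$ via an edge $\{w_i,v_i\}$. For an $s$-partition $A=\{a_1,\dots,a_s\}$ of $r$, $\widehat K_r(A)$ is the quotient graph obtained from $\widehat K_r$ by contracting (identifying) the vertex sets $\{v_1,\dots,v_{a_1}\}$, $\{v_{a_1+1},\dots,v_{a_1+a_2}\}$, …, $\{v_{a_1+\dots+a_{s-1}+1},\dots,v_r\}$ each into a single vertex, keeping all edges; thus $\widehat K_r(A)$ consists of $K_r$ together with $s$ further vertices, the $j$-th adjacent exactly to the $a_j$ vertices $w_i$ of the $j$-th block. The standard Laplacian is $(\Delta_G f)(v)=f(v)-\frac{1}{\deg v}\sum_{u\in N_v}f(u)$ and the signless standard Laplacian is $(\Delta_{G^+}f)(v)=f(v)+\frac{1}{\deg v}\sum_{u\in N_v}f(u)$ (equivalently $I\mp D^{-1/2}AD^{-1/2}$). Two graphs are isospectral for an operator if the operators have the same eigenvalues with multiplicities. *)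

(* Defs.v *)
From HB Require Import structures.
From mathcomp Require Import all_boot all_order all_algebra.
Set Implicit Arguments. Unset Strict Implicit. Unset Printing Implicit Defensive.
Import Order.TTheory GRing.Theory Num.Theory.

(* An s-partition of r, represented by a sequence [a_1; ...; a_s] of positive
   integers summing to r.  As a multiset it is determined up to perm_eq. *)
Definition is_partition (r s : nat) (A : seq nat) : bool :=
  [&& size A == s, all (fun a => 0 < a) A & sumn A == r].

(* vertex index i (0 <= i < r) of w_{i+1} lies in the j-th block (0-based) *)
Definition inblock (A : seq nat) (j i : nat) : bool :=
  (sumn (take j A) <= i) && (i < sumn (take j.+1 A)).

(* The graph \widehat K_r(A) on the vertex set 'I_(r+s):
   vertices 0..r-1 are w_1..w_r (forming K_r), vertices r..r+s-1 are the
   s contracted pendant vertices, the j-th adjacent exactly to the w_i of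
   the j-th block. *)
Definition Khat (r s : nat) (A : seq nat) : rel 'I_(r + s) :=
  fun x y =>
    match split x, split y with
    | inl i, inl j => i != j
    | inl i, inr j => inblock A j i
    | inr j, inl i => inblock A j i
    | inr _, inr _ => false
    end.

Definition graph_iso (T1 T2 : finType) (e1 : rel T1) (e2 : rel T2) : Prop :=
  exists f : T1 -> T2, bijective f /\ forall x y, e2 (f x) (f y) = e1 x y.

Definition deg (T : finType) (e : rel T) (x : T) : nat := #|[set y | e x y]|.

Local Open Scope ring_scope.

(* matrix of the standard Laplacian  f(v) - 1/deg v * sum_{u ~ v} f(u),
   i.e. I - D^{-1} A_G *)
Definition std_laplacian (R : fieldType) (n : nat) (e : rel 'I_n) : 'M[R]_n :=
  \matrix_(x, y) ((x == y)%:R - (e x y)%:R / (deg e x)%:R).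

Definition signless_std_laplacian (R : fieldType) (n : nat) (e : rel 'I_n) : 'M[R]_n :=
  \matrix_(x, y) ((x == y)%:R + (e x y)%:R / (deg e x)%:R).

(* isospectral: same eigenvalues with (algebraic) multiplicities,
   i.e. equal characteristic polynomials *)
Definition isospectral (R : fieldType) (n : nat) (M N : 'M[R]_n) : Prop :=
  char_poly M = char_poly N.

Arguments Khat r s A : clear implicits.
Arguments std_laplacian R {n} e.
Arguments signless_std_laplacian R {n} e.

(* Main.v *)
Require Import Defs.
From HB Require Import structures.
From mathcomp Require Import all_boot all_order all_algebra.
From mathcomp Require Import zify lra ring.
Set Implicit Arguments. Unset Strict Implicit. Unset Printing Implicit Defensive.

Lemma sumn_take_mono (A : seq nat) j k : j <= k -> sumn (take j A) <= sumn (take k A).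
Proof.
move=> jk; rewrite -(subnKC jk) takeD sumn_cat; exact: leq_addr.
Qed.

Lemma sumn_takeS (A : seq nat) j : j < size A ->
  sumn (take j.+1 A) = sumn (take j A) + nth 0 A j.
Proof. by move=> hj; rewrite (take_nth 0 hj) sumn_rcons. Qed.

Lemma inblock_uniq (A : seq nat) j k i : inblock A j i -> inblock A k i -> j = k.
Proof.
rewrite /inblock => /andP[h1 h2] /andP[h3 h4].
case: (ltngtP j k) => // jk.
- have := sumn_take_mono A jk; lia.
- have := sumn_take_mono A jk; lia.
Qed.

Lemma inblock_ex (A : seq nat) i : i < sumn A ->
  exists2 j, j < size A & inblock A j i.
Proof.
move=> hi.
have exP : exists j, i < sumn (take j.+1 A).
  by exists (size A); rewrite take_oversize.
case: (ex_minnP exP) => j hj hmin.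
have jlt : j < size A.
  rewrite ltnNge; apply/negP => hs.
  have sz : 0 < size A.
    by case: A hi {exP hj hmin hs} => //.
  have := hmin (size A).-1; rewrite prednK // take_size => /(_ hi).
  lia.
exists j => //; rewrite /inblock hj andbT.
case: j hj hmin jlt => [|j] hj hmin jlt; first by rewrite take0.
rewrite leqNgt; apply/negP => /hmin; lia.
Qed.

Lemma inblock_card (A : seq nat) j : j < size A ->
  \sum_(i < sumn A) (inblock A j i : nat) = nth 0 A j.
Proof.
move=> hj.
rewrite -(big_mkord xpredT (fun i => (inblock A j i : nat))).
set m := sumn (take j A).
have e1 : sumn (take j.+1 A) = m + nth 0 A j by rewrite sumn_takeS.
have le2 : m + nth 0 A j <= sumn A.
  by rewrite -e1 -{2}(take_size A); apply: sumn_take_mono.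
rewrite (@big_cat_nat _ _ _ m 0 (sumn A)) ?(leq_trans (leq_addr _ _) le2) //=.
rewrite (@big_cat_nat _ _ _ (m + nth 0 A j) m (sumn A)) ?leq_addr //=.
rewrite big_nat_cond big1 ?add0n; last first.
  by move=> i /andP[/andP[_ hi] _]; rewrite /inblock -/m leqNgt hi.
rewrite [X in _ + X]big_nat_cond [X in _ + X]big1 ?addn0; last first.
  by move=> i /andP[/andP[hi _] _]; rewrite /inblock e1 ltnNge hi andbF.
rewrite big_nat_cond (eq_bigr (fun _ => 1)).
  by rewrite -big_nat_cond sum_nat_const_nat muln1 addKn.
by move=> i /andP[/andP[h1 h2] _]; rewrite /inblock e1 h1 h2.
Qed.

Lemma split_l m n (i : 'I_m) : split (lshift n i) = inl i.
Proof. exact: (unsplitK (inl _ i)). Qed.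
Lemma split_r m n (i : 'I_n) : split (rshift m i) = inr i.
Proof. exact: (unsplitK (inr _ i)). Qed.

Lemma degE (T : finType) (e : rel T) x : deg e x = \sum_y (e x y : nat).
Proof. by rewrite /deg -sum1dep_card big_mkcond. Qed.

Section Graph.
Variables (r s : nat) (A : seq nat).
Hypothesis hp : is_partition r s A.
Hypothesis r0 : 0 < r.

Lemma hsize : size A = s. Proof. by case/and3P: hp => /eqP. Qed.
Lemma hsum : sumn A = r. Proof. by case/and3P: hp => _ _ /eqP. Qed.
Lemma hpos j : j < s -> 0 < nth 0 A j.
Proof.
case/and3P: hp => /eqP hs /allP hall _ hj; apply: hall; apply: mem_nth; by rewrite hs.
Qed.

Lemma Khat_ll i k : Khat r s A (lshift s i) (lshift s k) = (i != k).
Proof. by rewrite /Khat !split_l. Qed.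
Lemma Khat_lr i j : Khat r s A (lshift s i) (rshift r j) = inblock A j i.
Proof. by rewrite /Khat split_l split_r. Qed.
Lemma Khat_rl j i : Khat r s A (rshift r j) (lshift s i) = inblock A j i.
Proof. by rewrite /Khat split_l split_r. Qed.
Lemma Khat_rr j k : Khat r s A (rshift r j) (rshift r k) = false.
Proof. by rewrite /Khat !split_r. Qed.

Lemma block_one (i : 'I_r) : \sum_(j < s) (inblock A j i : nat) = 1.
Proof.
have [j0 hj0 hin] : exists2 j, j < size A & inblock A j i.
  by apply: inblock_ex; rewrite hsum.
rewrite hsize in hj0.
rewrite (bigD1 (Ordinal hj0)) //= hin big1 // => j hj.
apply/eqP; rewrite eqb0; apply/negP => hj'.
move/eqP: hj; apply; apply: val_inj => /=; exact: inblock_uniq hj' hin.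
Qed.

Lemma deg_l i : deg (Khat r s A) (lshift s i) = r.
Proof.
rewrite degE big_split_ord /=.
under eq_bigr do rewrite Khat_ll.
under [X in _ + X]eq_bigr do rewrite Khat_lr.
rewrite block_one (bigD1 i) //= eqxx add0n.
rewrite (eq_bigr (fun _ => 1)) => [|k hk]; last by rewrite eq_sym hk.
by rewrite sum1_card cardC1 card_ord addn1 prednK.
Qed.

Lemma deg_r j : deg (Khat r s A) (rshift r j) = nth 0 A j.
Proof.
rewrite degE big_split_ord /=.
under eq_bigr do rewrite Khat_rl.
under [X in _ + X]eq_bigr do rewrite Khat_rr.
rewrite [X in _ + X]big1 // addn0.
have := @inblock_card A j; rewrite hsize hsum => ->//.
Qed.

End Graph.

Lemma deg_iso (T1 T2 : finType) (e1 : rel T1) (e2 : rel T2) (f : T1 -> T2) :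
  bijective f -> (forall x y, e2 (f x) (f y) = e1 x y) ->
  forall x, deg e2 (f x) = deg e1 x.
Proof.
move=> bf hf x; rewrite !degE.
have [g fK gK] := bf.
rewrite (reindex f) /=; last by exists g => y _; [exact: fK | exact: gK].
by apply: eq_bigr => y _; rewrite hf.
Qed.

Lemma count_deg r s A (hp : is_partition r s A) (r0 : 0 < r) d :
  \sum_x (deg (Khat r s A) x == d : nat) = (r == d) * r + count (pred1 d) A.
Proof.
rewrite big_split_ord /=.
under eq_bigr do rewrite deg_l //.
under [X in _ + X]eq_bigr do rewrite deg_r //.
rewrite sum_nat_const card_ord mulnC; congr (_ + _).
rewrite -sum1_count big_mkcond (big_nth 0) (hsize hp) big_mkord.
by rewrite [RHS]big_mkcond; apply: eq_bigr => j _ /=; case: (_ == _).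
Qed.

Lemma noniso r s A B : 0 < r -> is_partition r s A -> is_partition r s B ->
  ~ perm_eq A B -> ~ graph_iso (Khat r s A) (Khat r s B).
Proof.
move=> r0 hA hB nAB [f [bf hf]]; apply: nAB.
have [g fK gK] := bf.
apply/allP => x _ /=; apply/eqP.
have := count_deg hA r0 x; have := count_deg hB r0 x.
rewrite (reindex f) /=; last by exists g => y _; [exact: fK | exact: gK].
under eq_bigr do rewrite (deg_iso bf hf).
by move=> -> /addnI.
Qed.

Import Order.TTheory GRing.Theory Num.Theory.
Local Open Scope ring_scope.

Lemma sylvester (R : comNzRingType) n k (A : 'M[R]_(n,k)) (B : 'M[R]_(k,n)) :
  \det (1%:M + A *m B) = \det (1%:M + B *m A).
Proof.
have E1 : block_mx 1%:M (- A) B 1%:M =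
   block_mx 1%:M 0 B 1%:M *m block_mx 1%:M (- A) 0 (1%:M + B *m A).
  rewrite mulmx_block !(mul1mx, mul0mx, mulmx1, mulmx0, addr0, add0r).
  by rewrite mulmxN addrC addrK.
have E2 : block_mx 1%:M (- A) B 1%:M =
   block_mx 1%:M (- A) 0 1%:M *m block_mx (1%:M + A *m B) 0 B 1%:M.
  rewrite mulmx_block !(mul1mx, mul0mx, mulmx1, mulmx0, addr0, add0r).
  by rewrite mulNmx addrK.
have := congr1 determinant E1; rewrite E2 !det_mulmx det_lblock det_ublock det_ublock det_lblock !det1 !mul1r !mulr1 => ->.
by [].
Qed.

Lemma schur (R : fieldType) n1 n2 (X : 'M[R]_n1) (U : 'M[R]_(n1,n2)) V (y : R) :
  y != 0 ->
  \det (block_mx X U V y%:M) = y ^+ n2 * \det (X - y^-1 *: (U *m V)).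
Proof.
move=> y0.
have E : block_mx X U V y%:M =
   block_mx 1%:M (y^-1 *: U) 0 1%:M *m block_mx (X - y^-1 *: (U *m V)) 0 V y%:M.
  rewrite mulmx_block !(mul1mx, mul0mx, mulmx1, mulmx0, addr0, add0r).
  by rewrite -scalemxAl subrK -scalemxAl mul_mx_scalar scalerA mulVf // scale1r.
by rewrite E det_mulmx det_ublock det_lblock !det1 det_scalar mulr1 mul1r mulrC.
Qed.

Lemma E1gen (R : fieldType) m n p (L : 'M[R]_(m,n)) (W : 'M[R]_n) (U : 'M[R]_(n,p)) (a b : R) :
  L *m (a *: W + b%:M) *m U = a *: (L *m W *m U) + b *: (L *m U).
Proof. by rewrite mulmxDr mulmxDl mul_mx_scalar -scalemxAr -!scalemxAl. Qed.
Lemma E2gen (R : fieldType) m n (L : 'M[R]_(m,n)) (M : 'M[R]_(n,m)) (c : R) : c != 0 ->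
  c%:M - L *m M = c%:M *m (1%:M + L *m (- c^-1 *: M)).
Proof.
move=> c0; rewrite mulmxDr mulmx1 mul_scalar_mx -scalemxAr scalerA mulrN divff //.
by rewrite scaleN1r.
Qed.

Definition Pm (R : fieldType) n (e : rel 'I_n) : 'M[R]_n :=
  \matrix_(x, y) ((e x y)%:R / (deg e x)%:R).

Section Mat.
Variables (R : realFieldType) (r s : nat) (A : seq nat).
Hypothesis hp : is_partition r s A.
Hypothesis r0 : (0 < r)%N.

Definition Lmat : 'M[R]_(r, s) := \matrix_(i, j) (inblock A j i)%:R.
Definition Umat : 'M[R]_(s, r) := \matrix_(j, i) ((inblock A j i)%:R / (nth 0 A j)%:R).
Definition Ocol : 'M[R]_(s, 1) := const_mx 1.
Definition Arow : 'M[R]_(1, s) := \row_l (nth 0 A l)%:R.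

Lemma anz (j : 'I_s) : (nth 0 A j)%:R != 0 :> R.
Proof. by rewrite pnatr_eq0 -lt0n (hpos hp). Qed.

Lemma Pm_block : Pm R (Khat r s A) =
  block_mx (r%:R^-1 *: (const_mx 1 - 1%:M)) (r%:R^-1 *: Lmat) Umat 0.
Proof.
apply/matrixP => x y.
case: (split_ordP x) => i ->; case: (split_ordP y) => k ->.
- rewrite block_mxEul !mxE Khat_ll deg_l //.
  by case: (i == k) => /=; rewrite ?subrr ?subr0 ?mulr0 ?mul0r ?mulr1 ?mul1r.
- by rewrite block_mxEur !mxE Khat_lr deg_l // mulrC.
- by rewrite block_mxEdl !mxE Khat_rl deg_r.
- by rewrite block_mxEdr !mxE Khat_rr mul0r.
Qed.

Lemma UL : Umat *m Lmat = 1%:M.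
Proof.
apply/matrixP => j k; rewrite !mxE.
case: (j =P k) => [<-|njk] /=.
  under eq_bigr do rewrite !mxE mulrAC -natrM mulnb andbb.
  rewrite -mulr_suml -natr_sum.
  have := @inblock_card A j; rewrite (hsize hp) (hsum hp) => -> //.
  by rewrite divff // anz.
apply: big1 => i _; rewrite !mxE.
case hj: (inblock A j i); case hk: (inblock A k i); rewrite ?mul0r ?mulr0 //.
by case: njk; apply: val_inj; exact: inblock_uniq hj hk.
Qed.

Lemma LWU : Lmat *m (Ocol *m Arow) *m Umat = const_mx 1.
Proof.
apply/matrixP => i k; rewrite !mxE.
have e1 : forall l : 'I_s, (Lmat *m (Ocol *m Arow)) i l = (nth 0 A l)%:R.
  move=> l; rewrite !mxE.
  under eq_bigr do rewrite !mxE big_ord1 !mxE mul1r.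
  by rewrite -mulr_suml -natr_sum block_one // mul1r.
under eq_bigr do rewrite e1 !mxE mulrCA divff ?anz // mulr1.
by rewrite -natr_sum block_one.
Qed.


Lemma hsumR : \sum_(l < s) (nth 0 A l)%:R = r%:R :> R.
Proof. by rewrite -natr_sum -(hsum hp) sumnE (big_nth 0) (hsize hp) big_mkord. Qed.

Definition Fdet (R : fieldType) (r s : nat) (y : R) : R :=
  let c := y + r%:R^-1 in
  let be := 1 - c^-1 * (r%:R^-1 * y^-1) in
  let ga := c^-1 * r%:R^-1 in
  y ^+ s * (c ^+ r * (be ^+ s * (1 - ga / be * r%:R))).

Lemma step1 (J Q : 'M[R]_r) (y : R) :
  y%:M - r%:R^-1 *: (J - 1%:M) - y^-1 *: (r%:R^-1 *: Q) =
  (y + r%:R^-1)%:M - (r%:R^-1 *: J + (r%:R^-1 * y^-1) *: Q).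
Proof. apply/matrixP => i j; rewrite !mxE; ring. Qed.

Lemma step2 (W : 'M[R]_s) (y c : R) :
  1%:M - c^-1 *: (r%:R^-1 *: W + (r%:R^-1 * y^-1)%:M) =
  (1 - c^-1 * (r%:R^-1 * y^-1))%:M - (c^-1 * r%:R^-1) *: W.
Proof. apply/matrixP => i j; rewrite !mxE; ring. Qed.

Lemma detP (y : R) : 1 <= y ->
  \det (y%:M - Pm R (Khat r s A)) = Fdet r s y.
Proof.
move=> hy.
have y0 : y != 0 by apply: lt0r_neq0; lra.
have rpos : 0 < r%:R :> R by rewrite ltr0n.
set c := y + r%:R^-1.
have cpos : 0 < c by rewrite /c; apply: ltr_wpDl; [lra | rewrite invr_gt0].
have c0 : c != 0 by apply: lt0r_neq0.
set be := 1 - c^-1 * (r%:R^-1 * y^-1).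
have be0 : be != 0.
  rewrite /be; move: cpos c0; rewrite /c.
  set u := r%:R^-1 => cpos c0.
  have hu : u * r%:R = 1 by rewrite /u mulVf ?lt0r_neq0.
  have upos : 0 < u by rewrite /u invr_gt0.
  have r1 : 1 <= r%:R :> R by rewrite ler1n.
  set t := (y + u)^-1 * (u * y^-1).
  have ht : t * ((y + u) * r%:R * y) = 1.
    rewrite /t -[RHS]hu; field.
    by rewrite c0 y0.
  have tpos : 0 < t by rewrite /t !mulr_gt0 ?invr_gt0 //; lra.
  have big : 1 < (y + u) * r%:R * y by nra.
  apply: lt0r_neq0; nra.
rewrite Pm_block (scalar_mx_block r s y) opp_block_mx add_block_mx oppr0 addr0.
rewrite schur //.
rewrite !sub0r mulNmx mulmxN opprK -scalemxAl step1 -LWU.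
set W := Ocol *m Arow.
rewrite -E1gen -/c -mulmxA E2gen // det_mulmx det_scalar sylvester.
rewrite -scalemxAl -mulmxA UL mulmx1 scaleNr step2 -/be.
rewrite /W scalemxAr E2gen // det_mulmx det_scalar sylvester det_mx11 !mxE.
under eq_bigr do rewrite !mxE mulr1.
rewrite -mulr_sumr -mulr_sumr hsumR eqxx /Fdet -/c -/be.
by congr (_ * (_ * (_ * _))); rewrite /=; ring.
Qed.

End Mat.

Lemma char_poly_eval (R : comNzRingType) n (M : 'M[R]_n) (x : R) :
  (char_poly M).[x] = \det (x%:M - M).
Proof.
have := det_map_mx (horner_eval x) (char_poly_mx M).
move=> h; transitivity (horner_eval x (\det (char_poly_mx M))); first by []. rewrite -h; congr (\det _).
apply/matrixP => i j; rewrite !mxE rmorphB rmorphMn /=.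
have -> : horner_eval x 'X = x by exact: hornerX.
have -> : horner_eval x (M i j)%:P = M i j by exact: hornerC.
by [].
Qed.

Lemma char_poly_eq (R : numDomainType) n (M N : 'M[R]_n) (f : nat -> R) :
  injective f -> (forall k, \det ((f k)%:M - M) = \det ((f k)%:M - N)) ->
  char_poly M = char_poly N.
Proof.
move=> finj h; apply/eqP; rewrite -subr_eq0; apply/eqP.
apply: (@roots_geq_poly_eq0 _ _ (map f (iota 0 n.+1))).
- apply/allP => x /mapP[k _ ->]; rewrite /root hornerD hornerN !char_poly_eval h.
  by rewrite subrr.
- by rewrite map_inj_uniq // iota_uniq.
- rewrite size_map size_iota; apply: leq_trans (size_polyD _ _) _.
  by rewrite size_polyN !size_char_poly maxnn.
Qed.

Lemma std_eq (R : fieldType) n (e : rel 'I_n) :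
  std_laplacian R e = 1%:M - Pm R e.
Proof. by apply/matrixP => i j; rewrite !mxE. Qed.
Lemma sgn_eq (R : fieldType) n (e : rel 'I_n) :
  signless_std_laplacian R e = 1%:M + Pm R e.
Proof. by apply/matrixP => i j; rewrite !mxE. Qed.

Lemma id1 (R : fieldType) n (P : 'M[R]_n) (k : nat) :
  (- k%:R)%:M - (1%:M - P) = (-1) *: ((k.+1)%:R%:M - P).
Proof. apply/matrixP => i j; rewrite !mxE -addn1 natrD; ring. Qed.
Lemma id2 (R : fieldType) n (P : 'M[R]_n) (k : nat) :
  (k.+2)%:R%:M - (1%:M + P) = ((k.+1)%:R%:M - P).
Proof. apply/matrixP => i j; rewrite !mxE -(addn1 k.+1) natrD; ring. Qed.

Local Close Scope ring_scope.

Theorem mainTheorem5 (R : realFieldType) (r s : nat) (A B : seq nat) :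
  4 <= r -> 2 <= s <= r.-1 ->
  is_partition r s A -> is_partition r s B -> ~ perm_eq A B ->
  ~ graph_iso (Khat r s A) (Khat r s B) /\
  isospectral (std_laplacian R (Khat r s A)) (std_laplacian R (Khat r s B)) /\
  isospectral (signless_std_laplacian R (Khat r s A))
              (signless_std_laplacian R (Khat r s B)).
Proof.
move=> r4 _ hA hB nAB.
have r0 : (0 < r)%N by apply: leq_trans r4.
have hy k : (1 <= (k.+1)%:R :> R)%R by rewrite ler1n.
split; first exact: noniso.
split.
- rewrite /isospectral !std_eq.
  apply: (@char_poly_eq _ _ _ _ (fun k => - k%:R)%R).
    by move=> a b /oppr_inj /eqP; rewrite eqr_nat => /eqP.
  move=> k; by rewrite !id1 !detZ !detP.
- rewrite /isospectral !sgn_eq.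
  apply: (@char_poly_eq _ _ _ _ (fun k => (k.+2)%:R : R)%R).
    by move=> a b /eqP; rewrite eqr_nat => /eqP [].
  move=> k; by rewrite !id2 !detP.
Qed.
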